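(* Let $P$ be a profile of linear orders on a finite set $A$ which is single-crossing with respect to some tree on its voter set. Then every subprofile of $P$ is single-crossing with respect to some tree on its own voter set if and only if $P$ is single-crossing with respect to a line (a path graph on the voter set).
   Context: A profile assigns a linear order on $A$ to each voter in a finite voter set; a subprofile is the restriction of the profile to a nonempty subset of voters. Voter $i$ prefers $a$ to $b$ is written $a\succ_i b$. Given a tree $T=(V,E)$ on the voter set, the profile is single-crossing with respect to $T$ if for every pair of distinct alternatives $a,b$ one of the following holds: (i) there is an edge $e\in E$ such that, removing $e$ from $T$, the two resulting subtrees have vertex sets $V_1,V_2$ with all voters in $V_1$ preferring $a$ to $b$ and all voters in $V_2$ preferring $b$ to $a$; or (ii) all voters prefer $a$ to $b$, or all voters prefer $b$ to $a$. *)

(* Defs.v *)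
From mathcomp Require Import all_boot.
Set Implicit Arguments. Unset Strict Implicit. Unset Printing Implicit Defensive.

(* A strict linear order on A: pref a b means "a is preferred to b". *)
Definition strict_linear_order (A : finType) (pref : rel A) : Prop :=
  [/\ forall a, ~~ pref a a,
      forall a b c, pref a b -> pref b c -> pref a c &
      forall a b, a != b -> pref a b || pref b a].

Section Graphs.
Variable V : finType.

Definition adj (E : {set {set V}}) : rel V :=
  fun x y => (x != y) && ([set x; y] \in E).

Definition edges_in (S : {set V}) (E : {set {set V}}) : Prop :=
  forall e, e \in E -> exists x y, [/\ x \in S, y \in S, x != y & e = [set x; y]].

Definition connected_on (S : {set V}) (E : {set {set V}}) : Prop :=
  forall x y, x \in S -> y \in S -> connect (adj E) x y.

Definition acyclic (E : {set {set V}}) : Prop :=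
  ~ exists (x : V) (p : seq V),
      [/\ uniq (x :: p), 2 <= size p, path (adj E) x p & adj E (last x p) x].

Definition is_tree (S : {set V}) (E : {set {set V}}) : Prop :=
  [/\ edges_in S E, connected_on S E & acyclic E].

Definition is_path_graph (S : {set V}) (E : {set {set V}}) : Prop :=
  exists s : seq V,
    [/\ uniq s, (forall x, (x \in s) = (x \in S)) &
        E = [set [set p.1; p.2] | p in zip s (behead s)]].

End Graphs.

Definition single_crossing (V A : finType) (P : V -> rel A)
    (S : {set V}) (E : {set {set V}}) : Prop :=
  forall a b : A, a != b ->
    (exists e, e \in E /\ exists u v : V, [/\ u != v, e = [set u; v] &
        forall x, x \in S ->
          (connect (adj (E :\ e)) u x -> P x a b) /\
          (connect (adj (E :\ e)) v x -> P x b a)])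
    \/ (forall x, x \in S -> P x a b)
    \/ (forall x, x \in S -> P x b a).

(* Main.v *)
Require Import Defs.
From mathcomp Require Import all_boot.
From Stdlib Require Import Classical.
From mathcomp Require Import zify.
Set Implicit Arguments. Unset Strict Implicit. Unset Printing Implicit Defensive.

Section Gen.
Variable V : finType.

Lemma closure_connect (F : rel V) (Q : V -> Prop) x y :
  (forall a b, Q a -> F a b -> Q b) -> Q x -> connect F x y -> Q y.
Proof.
move=> HQ Qx /connectP [p Hp ->] {y}.
elim: p x Qx Hp => [|z p IH] x Qx //= /andP [Fxz Hp].
exact: IH (HQ _ _ Qx Fxz) Hp.
Qed.

Lemma connect_restr (F G : rel V) (Q : V -> Prop) x y :
  (forall a b, Q a -> F a b -> Q b /\ G a b) -> Q x -> connect F x y -> connect G x y.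
Proof.
move=> H Qx /connectP [p Hp ->] {y}.
elim: p x Qx Hp => [|z p IH] x Qx //= /andP [Fxz Hp].
have [Qz Gxz] := H _ _ Qx Fxz.
exact: connect_trans (connect1 Gxz) (IH _ Qz Hp).
Qed.

Lemma adj_sym (E : {set {set V}}) : symmetric (adj E).
Proof. by move=> x y; rewrite /adj eq_sym setUC. Qed.

Lemma connectC (E : {set {set V}}) x y : connect (adj E) x y = connect (adj E) y x.
Proof. exact: (sym_connect_sym (@adj_sym E)). Qed.

Lemma cover_e (E : {set {set V}}) u v z :
  connect (adj E) u z ->
  connect (adj (E :\ [set u; v])) u z \/ connect (adj (E :\ [set u; v])) v z.
Proof.
move=> Huz.
apply: (closure_connect (Q := fun z => connect (adj (E :\ [set u;v])) u z \/
    connect (adj (E :\ [set u;v])) v z)) _ _ Huz; last by left.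
move=> a b Hab Eab.
case: (boolP ([set a; b] == [set u; v])) => [/eqP eab|neab].
- have : b \in [set u; v] by rewrite -eab !inE eqxx orbT.
  by case/set2P => ->; [left|right]; exact: connect0.
- have Fab : adj (E :\ [set u; v]) a b.
    by move: Eab; rewrite /adj !inE neab => /andP [-> ->].
  by case: Hab => H; [left|right]; apply: connect_trans H (connect1 Fab).
Qed.

Lemma path_cross (E : {set {set V}}) (e1 e2 : {set V}) t z :
  (forall y, connect (adj (E :\ e1)) t y -> y \notin e2) ->
  connect (adj (E :\ e1)) t z -> connect (adj (E :\ e2)) t z.
Proof.
move=> H; apply: (connect_restr (Q := fun y => connect (adj (E :\ e1)) t y)); last exact: connect0.
move=> a b Ta Fab; split; first exact: connect_trans Ta (connect1 Fab).
move: Fab; rewrite /adj !inE => /andP [-> /andP [_ ->]]; rewrite andbT /=.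
apply/negP => /eqP eab; have := H a Ta; by rewrite -eab !inE eqxx.
Qed.

Definition pathE (s : seq V) : {set {set V}} :=
  [set [set p.1; p.2] | p in zip s (behead s)].

Lemma mem_zip_cons (s : seq V) a b : uniq s -> (a, b) \in zip s (behead s) ->
  [/\ a \in s, b \in s & index b s = (index a s).+1].
Proof.
elim: s => [|x s IH] //=.
case: s IH => [|y s] IH //=.
move=> /andP [nx Hu]; rewrite inE => /orP [/eqP [-> ->]|H].
- move: nx; rewrite !inE negb_or => /andP [nxy _].
  by rewrite !eqxx (negbTE nxy) !orbT.
- have [ays bys iab] := IH Hu H.
  have xa : (x == a) = false by apply: contraNF nx => /eqP ->.
  have xb : (x == b) = false by apply: contraNF nx => /eqP ->.
  move: iab => /=; move: ays bys; rewrite !inE => ays bys iab.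
  by rewrite ays bys !orbT xa xb iab.
Qed.

Lemma set2_eq (x y a b : V) : x != y -> [set x; y] = [set a; b] ->
  (x = a /\ y = b) \/ (x = b /\ y = a).
Proof.
move=> nxy e.
have hx : x \in [set a; b] by rewrite -e !inE eqxx.
have hy : y \in [set a; b] by rewrite -e !inE eqxx orbT.
case/set2P: hx => ex; case/set2P: hy => ey; subst; rewrite ?eqxx // in nxy; by [left|right].
Qed.

Lemma adj_path s y z : uniq s -> adj (pathE s) y z ->
  [/\ y \in s, z \in s & index z s = (index y s).+1 \/ index y s = (index z s).+1].
Proof.
move=> us /andP [nyz /imsetP [[a b] Hab eab]].
have [ais bis iab] := mem_zip_cons us Hab.
case: (set2_eq nyz eab) => [[-> ->]|[-> ->]]; split => //; by [left|right].
Qed.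

Lemma zip_nth x0 (s : seq V) i : i.+1 < size s ->
  (nth x0 s i, nth x0 s i.+1) \in zip s (behead s).
Proof.
move=> hi.
have hz : i < size (zip s (behead s)).
  by rewrite size_zip size_behead; move: hi; case: (size s) => //= n; lia.
have := mem_nth (x0, x0) hz; rewrite nth_zip_cond hz /= nth_behead //.
Qed.

Lemma adj_path_nth x0 s i : uniq s -> i.+1 < size s ->
  adj (pathE s) (nth x0 s i) (nth x0 s i.+1).
Proof.
move=> us hi; apply/andP; split.
  by rewrite nth_uniq // ?(ltnW hi) // eqn_leq ltnn andbF.
by apply/imsetP; exists (nth x0 s i, nth x0 s i.+1) => //; apply: zip_nth.
Qed.

Lemma index_eq (s : seq V) x y : x \in s -> y \in s -> index x s = index y s -> x = y.
Proof. by move=> xs ys e; rewrite -(nth_index x xs) -(nth_index x ys) e. Qed.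

Lemma path_conn0 x0 s i : uniq s -> i < size s ->
  connect (adj (pathE s)) (nth x0 s 0) (nth x0 s i).
Proof.
move=> us; elim: i => [|i IH] hi; first exact: connect0.
exact: connect_trans (IH (ltnW hi)) (connect1 (adj_path_nth x0 us hi)).
Qed.

Lemma path_conn s x y : uniq s -> x \in s -> y \in s -> connect (adj (pathE s)) x y.
Proof.
move=> us xs ys.
have h1 := path_conn0 x us (etrans (index_mem x s) xs).
have h2 := path_conn0 x us (etrans (index_mem y s) ys).
rewrite !nth_index // in h1 h2.
by apply: connect_trans h2; rewrite connectC.
Qed.

Lemma exists_max (T : eqType) (f : T -> nat) (c : seq T) x : x \in c ->
  exists2 m, m \in c & forall y, y \in c -> f y <= f m.
Proof.
elim: c x => [|z c IH] x //= _.
case: (boolP (c == [::])) => [/eqP ->|nc].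
  by exists z; rewrite ?inE // => y; rewrite inE => /eqP ->.
have [w wc] : exists w, w \in c by case: c nc {IH} => [|w c] //; exists w; rewrite inE eqxx.
have [m mc mm] := IH w wc.
case: (leqP (f z) (f m)) => h.
  exists m; first by rewrite inE mc orbT.
  by move=> y; rewrite inE => /orP [/eqP ->|/mm].
exists z; first by rewrite inE eqxx.
move=> y; rewrite inE => /orP [/eqP ->//|/mm hy]; exact: leq_trans hy (ltnW h).
Qed.

Lemma path_acyclic s : uniq s -> acyclic (pathE s).
Proof.
move=> us [x [p [up sp pp lp]]].
have cyc : cycle (adj (pathE s)) (x :: p) by rewrite /= rcons_path pp lp.
have [m mc mmax] := exists_max (fun y => index y s) (mem_head x p).
case: (rot_to mc) => i q eq.
have cyc' : cycle (adj (pathE s)) (m :: q) by rewrite -eq rot_cycle.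
have uc' : uniq (m :: q) by rewrite -eq rot_uniq.
have mc' : forall y, y \in m :: q -> index y s <= index m s
  by move=> y; rewrite -eq mem_rot; exact: mmax.
have sc' : 3 <= size (m :: q) by rewrite -eq size_rot /= ltnS.
case: q sc' cyc' uc' mc' {eq} => [|y1 [|y2 q]] // _.
move=> cyc' uc' mc'.
move: cyc'; rewrite /cycle rcons_path => /andP [pth alast].
have a1 : adj (pathE s) m y1 by case/andP: pth.
set yl := last y2 q.
have {}alast : adj (pathE s) yl m by [].
have ylq : yl \in y2 :: q by apply: mem_last.
have y1yl : y1 != yl.
  by move: uc' => /= /andP [_ /andP [+ _]]; apply: contra => /eqP ->.
have [ims y1s h1] := adj_path us a1.
have [yls _ h2] := adj_path us alast.
have hy1 : index m s = (index y1 s).+1.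
  case: h1 => // h.
  by have := mc' y1; rewrite !in_cons eqxx orbT h ltnn => /(_ isT).
have hyl : index m s = (index yl s).+1.
  case: h2 => // h.
  have ylq' := ylq; rewrite in_cons in ylq'.
  by have := mc' yl; rewrite !in_cons ylq' !orbT h ltnn => /(_ isT).
move/eqP: y1yl; apply; apply: (index_eq y1s yls).
by apply/eqP; rewrite -eqSS -hy1 -hyl.
Qed.

Lemma path_step s a b : uniq s -> a \in s -> b \in s -> index b s = (index a s).+1 ->
  forall y z, adj (pathE s :\ [set a; b]) y z ->
  (index z s <= index a s) = (index y s <= index a s).
Proof.
move=> us ais bis iab y z /andP [nyz]; rewrite !inE => /andP [neq ine].
have ad : adj (pathE s) y z by rewrite /adj nyz ine.
have [ys zs [h|h]] := adj_path us ad.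
- case: (eqVneq (index y s) (index a s)) => [e|ne].
    have ya := index_eq ys ais e.
    have zb : z = b by apply: index_eq zs bis _; rewrite h iab e.
    by rewrite ya zb eqxx in neq.
  rewrite h; case: leqP => h1; case: leqP => h2 //; lia.
- case: (eqVneq (index z s) (index a s)) => [e|ne].
    have za := index_eq zs ais e.
    have yb : y = b by apply: index_eq ys bis _; rewrite h iab e.
    by rewrite za yb setUC eqxx in neq.
  rewrite h; case: leqP => h1; case: leqP => h2 //; lia.
Qed.

Lemma path_comp s a b t w : uniq s -> a \in s -> b \in s -> index b s = (index a s).+1 ->
  connect (adj (pathE s :\ [set a; b])) t w ->
  (index w s <= index a s) = (index t s <= index a s).
Proof.
move=> us ais bis iab.
apply: (closure_connect (Q := fun w => (index w s <= index a s) = (index t s <= index a s))) => //.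
by move=> y z hy hyz; rewrite (path_step us ais bis iab hyz).
Qed.

Lemma path_tree s (S : {set V}) : uniq s -> (forall x, (x \in s) = (x \in S)) ->
  is_tree S (pathE s).
Proof.
move=> us hs; split.
- move=> e /imsetP [[a b] hz ->].
  have [ais bis iab] := mem_zip_cons us hz.
  exists a, b; split; rewrite -?hs //.
  by apply/eqP => eab; move: iab; rewrite eab; lia.
- by move=> x y; rewrite -!hs; apply: path_conn.
- exact: path_acyclic.
Qed.

End Gen.

Section Prof.
Variables (V A : finType) (P : V -> rel A).
Hypothesis HP : forall i, strict_linear_order (P i).

Lemma lo_irr i a : P i a a = false.
Proof. by case: (HP i) => irr _ _; apply/negbTE. Qed.

Lemma lo_asym i a b : P i a b -> P i b a = false.
Proof.
case: (HP i) => irr tr _ h; apply/negP => h'.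
by move: (irr a); rewrite (tr _ _ _ h h').
Qed.

Lemma lo_flip i a b : a != b -> P i b a = ~~ P i a b.
Proof.
move=> nab; case h: (P i a b); first by rewrite (lo_asym h).
by case: (HP i) => _ _ tot; move: (tot a b nab); rewrite h.
Qed.

Definition Bt x y z := forall c : A * A, P x c.1 c.2 = P z c.1 c.2 -> P y c.1 c.2 = P x c.1 c.2.

Definition monoS (s : seq V) := forall x y z, x \in s -> y \in s -> z \in s ->
  index x s < index y s -> index y s < index z s -> Bt x y z.

Lemma path_sc s (S : {set V}) : uniq s -> (forall x, (x \in s) = (x \in S)) -> monoS s ->
  single_crossing P S (pathE s).
Proof.
move=> us hs hm a b nab.
case: (classic (forall x, x \in S -> P x a b)) => [H|H]; first by right; left.
case: (classic (forall x, x \in S -> P x b a)) => [H'|H']; first by right; right.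
left.
have [x1 [x1S nx1]] : exists x, x \in S /\ ~~ P x a b.
  apply: NNPP => hn; apply: H => x xS; apply: NNPP => hx; apply: hn; exists x; split => //.
  by apply/negP.
have [x2 [x2S nx2]] : exists x, x \in S /\ P x a b.
  apply: NNPP => hn; apply: H' => x xS; rewrite lo_flip //; apply/negP => hx; apply: hn.
  by exists x.
pose f i := P (nth x1 s i) a b.
have [m [hm1 hm2]] : exists m, m.+1 < size s /\ f m != f m.+1.
  apply: NNPP => hn.
  have hc : forall i, i < size s -> f i = f 0.
    elim=> [//|i IH] hi; rewrite -IH ?(ltnW hi) //.
    apply/eqP; apply: NNPP => hne; apply: hn; exists i; split => //.
    by apply/negP => /eqP e; apply: hne; rewrite e.
  have e1 := hc _ (etrans (index_mem x1 s) (etrans (hs x1) x1S)).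
  have e2 := hc _ (etrans (index_mem x2 s) (etrans (hs x2) x2S)).
  rewrite /f !nth_index ?hs // in e1 e2.
  by move: nx1; rewrite e1 -e2 nx2.
have side1 : forall i, i < size s -> i <= m -> f i = f m.
  move=> i hi him; case: (ltngtP i m) => [lim|//|->//]; last by lia.
  have := hm (nth x1 s i) (nth x1 s m) (nth x1 s m.+1) (mem_nth _ hi) (mem_nth _ (ltnW hm1)) (mem_nth _ hm1).
  rewrite !index_uniq // ?(ltnW hm1) // => /(_ lim (ltnSn m) (a, b)) /=.
  by move: hm2; rewrite /f; case: (P (nth x1 s i) a b); case: (P (nth x1 s m) a b);
    case: (P (nth x1 s m.+1) a b) => //= _ /(_ erefl).
have side2 : forall i, i < size s -> m < i -> f i = f m.+1.
  move=> i hi him; case: (ltngtP m.+1 i) => [lim|//|->//]; last by lia.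
  have := hm (nth x1 s m) (nth x1 s m.+1) (nth x1 s i) (mem_nth _ (ltnW hm1)) (mem_nth _ hm1) (mem_nth _ hi).
  rewrite !index_uniq // ?(ltnW hm1) // => /(_ (ltnSn m) lim (a, b)) /=.
  by move: hm2; rewrite /f; case: (P (nth x1 s i) a b); case: (P (nth x1 s m) a b);
    case: (P (nth x1 s m.+1) a b) => //= _ /(_ erefl).
set sm := nth x1 s m; set sm1 := nth x1 s m.+1.
have ism : index sm s = m by rewrite index_uniq // ltnW.
have ism1 : index sm1 s = m.+1 by rewrite index_uniq.
have sms : sm \in s by apply: mem_nth; apply: ltnW.
have sm1s : sm1 \in s by apply: mem_nth.
have iab : index sm1 s = (index sm s).+1 by rewrite ism ism1.
have c1 : forall w, w \in S -> connect (adj (pathE s :\ [set sm; sm1])) sm w -> P w a b = f m.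
  move=> w wS cw; have := path_comp us sms sm1s iab cw; rewrite ism leqnn => hw.
  have ws : w \in s by rewrite hs.
  by rewrite -(nth_index x1 ws); apply: side1 => //; rewrite index_mem.
have c2 : forall w, w \in S -> connect (adj (pathE s :\ [set sm; sm1])) sm1 w -> P w a b = f m.+1.
  move=> w wS cw; have := path_comp us sms sm1s iab cw; rewrite ism ism1 ltnn => /negbT hw.
  have ws : w \in s by rewrite hs.
  by rewrite -(nth_index x1 ws); apply: side2; [rewrite index_mem | rewrite ltnNge].
have ad := adj_path_nth x1 us hm1; case/andP: ad => nsm eE.
have fm1 : f m.+1 = ~~ f m by move: hm2; case: (f m); case: (f m.+1).
case hf: (f m).
- exists [set sm; sm1]; split => //; exists sm, sm1; split => // x xS; split => hc.
    by rewrite (c1 x xS hc).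
  by rewrite lo_flip // (c2 x xS hc) fm1 hf.
- exists [set sm1; sm]; rewrite setUC; split => //; exists sm1, sm; rewrite eq_sym setUC;
    split => // x xS; split => hc; rewrite setUC in hc.
    by rewrite (c2 x xS hc) fm1 hf.
  by rewrite lo_flip // (c1 x xS hc) hf.
Qed.

Lemma sc_path_mono s : uniq s -> (forall x, x \in s) ->
  single_crossing P [set: V] (pathE s) -> monoS s.
Proof.
move=> us alls hsc x y z xs ys zs ixy iyz [a b] /= hxz.
case: (eqVneq a b) => [<-|nab]; first by rewrite !lo_irr.
case: (hsc a b nab) => [[e [eE [u [v [nuv euv H]]]]]|[H|H]].
- move: eE => /imsetP [[a' b'] hz ee]; simpl in ee.
  have [a's b's iab] := mem_zip_cons us hz.
  pose g w := index w s <= index a' s.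
  have hcomp : forall t w, connect (adj (pathE s :\ e)) t w -> g w = g t.
    by move=> t w; rewrite ee; apply: path_comp.
  have guv : g u != g v.
    have := set2_eq nuv (etrans (esym euv) ee).
    by case=> [[-> ->]|[-> ->]]; rewrite /g iab ?ltnn ?leqnn.
  have key : forall w, P w a b = (g w == g u).
    move=> w; have cw : connect (adj (pathE s)) u w := path_conn us (alls u) (alls w).
    case: (cover_e v cw); rewrite -euv => hc.
    + by rewrite (proj1 (H w (in_setT w)) hc) (hcomp _ _ hc) eqxx.
    + have := proj2 (H w (in_setT w)) hc; rewrite lo_flip // => /negbTE ->.
      by rewrite (hcomp _ _ hc); move: guv; case: (g u); case: (g v).
  rewrite !key in hxz *.
  have gxz : g x = g z by move: hxz; case: (g x); case: (g z); case: (g u).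
  have gy : g y = g x.
    case gx: (g x); move: gxz; rewrite gx => /esym gz.
    - exact: leq_trans (ltnW iyz) gz.
    - apply/negbTE; rewrite -ltnNge; move/negbT: gx; rewrite -ltnNge => gx.
      exact: ltn_trans gx ixy.
  by rewrite gy.
- by rewrite !H ?in_setT.
- by rewrite (lo_asym (H y (in_setT y))) (lo_asym (H x (in_setT x))).
Qed.


Lemma Bt_sym x y z : Bt x y z -> Bt z y x.
Proof. by move=> h c e; rewrite h ?e. Qed.

Lemma Bt_l x z : Bt x x z.
Proof. by []. Qed.

Lemma Bt_r x z : Bt x z z.
Proof. by move=> c ->. Qed.

Definition T3on (S : {set V}) := forall x y z, x \in S -> y \in S -> z \in S ->
  Bt x y z \/ Bt y x z \/ Bt x z y.

Lemma mono_T3 s : monoS s -> forall x y z, x \in s -> y \in s -> z \in s ->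
  Bt x y z \/ Bt y x z \/ Bt x z y.
Proof.
move=> hm x y z xs ys zs.
case: (eqVneq x y) => [<-|nxy]; first by left; apply: Bt_l.
case: (eqVneq y z) => [<-|nyz]; first by left; apply: Bt_r.
case: (eqVneq x z) => [<-|nxz]; first by right; left; apply: Bt_r.
have hxy : index x s != index y s by apply: contra nxy => /eqP /(index_eq xs ys) ->.
have hyz : index y s != index z s by apply: contra nyz => /eqP /(index_eq ys zs) ->.
have hxz : index x s != index z s by apply: contra nxz => /eqP /(index_eq xs zs) ->.
set ix := index x s in hxy hxz *; set iy := index y s in hxy hyz *; set iz := index z s in hxz hyz *.
case: (ltngtP ix iy) => h1.
- case: (ltngtP iy iz) => h2.
  + by left; apply: hm.
  + case: (ltngtP ix iz) => h3.
    * by right; right; apply: hm.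
    * by right; left; apply: Bt_sym; apply: hm.
    * by rewrite h3 eqxx in hxz.
  + by rewrite h2 eqxx in hyz.
- case: (ltngtP ix iz) => h3.
  + by right; left; apply: hm.
  + case: (ltngtP iy iz) => h2.
    * by right; right; apply: Bt_sym; apply: hm.
    * by left; apply: Bt_sym; apply: hm.
    * by rewrite h2 eqxx in hyz.
  + by rewrite h3 eqxx in hxz.
- by rewrite h1 eqxx in hxy.
Qed.

End Prof.

Lemma sum_eq_le (I : finType) (F G : I -> nat) :
  (forall i, F i <= G i) -> \sum_i G i = \sum_i F i -> forall i, G i = F i.
Proof.
move=> hle heq i; apply/eqP; rewrite eqn_leq hle andbT.
move: heq; rewrite (bigD1 i) //= [X in _ = X](bigD1 i) //=.
have : \sum_(j | j != i) F j <= \sum_(j | j != i) G j by apply: leq_sum.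
lia.
Qed.

Lemma bool_aux (bx br bz b0 : bool) : (bx = bz -> br = bx) -> (br = b0 -> bx = br) ->
  br != bx -> [/\ b0 = bx, bz = br & b0 != bz].
Proof.
by case: bx; case: br; case: bz; case: b0 => //= h1 h2 _;
  try (by move: (h1 erefl)); try (by move: (h2 erefl)).
Qed.

Section Metric.
Variables (V A : finType) (P : V -> rel A).
Hypothesis HP : forall i, strict_linear_order (P i).

Definition d x y := \sum_(c : A * A) (P x c.1 c.2 != P y c.1 c.2).

Lemma dC x y : d x y = d y x.
Proof. by apply: eq_bigr => c _; rewrite eq_sym. Qed.

Lemma dpos x y : 0 < d x y -> exists c : A * A, P x c.1 c.2 != P y c.1 c.2.
Proof.
move=> h; apply: NNPP => hn; move: h; rewrite /d big1 // => c _.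
case: (boolP (P x c.1 c.2 != P y c.1 c.2)) => // hc; exfalso; apply: hn; by exists c.
Qed.

Lemma Bt_d x y z : Bt P x y z <-> d x y + d y z = d x z.
Proof.
split.
- move=> h; rewrite /d -big_split; apply: eq_bigr => c _ /=; have := h c.
  by case: (P x c.1 c.2); case: (P y c.1 c.2); case: (P z c.1 c.2) => //= /(_ erefl).
- move=> h c; move: h; rewrite /d -big_split => h.
  have hle : forall c : A * A, ((P x c.1 c.2 != P z c.1 c.2) : nat) <=
      (P x c.1 c.2 != P y c.1 c.2) + (P y c.1 c.2 != P z c.1 c.2).
    by move=> c'; case: (P x c'.1 c'.2); case: (P y c'.1 c'.2); case: (P z c'.1 c'.2).
  have := sum_eq_le hle h c.
  by case: (P x c.1 c.2); case: (P y c.1 c.2); case: (P z c.1 c.2).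
Qed.

Definition Ccond := forall (c1 c2 : A * A) p q r w,
  P p c1.1 c1.2 = P q c1.1 c1.2 -> P r c1.1 c1.2 = P w c1.1 c1.2 ->
  P p c1.1 c1.2 != P r c1.1 c1.2 ->
  P p c2.1 c2.2 = P r c2.1 c2.2 -> P q c2.1 c2.2 = P w c2.1 c2.2 ->
  P p c2.1 c2.2 != P q c2.1 c2.2 -> False.

Lemma Mline (S : {set V}) : T3on P S -> Ccond ->
  exists s, [/\ uniq s, forall x, (x \in s) = (x \in S) & monoS P s].
Proof.
move=> h3 hC.
case: (set_0Vmem S) => [->|[r0 r0S]].
  by exists [::]; split => // x; rewrite in_set0.
have r0r0 : (r0, r0) \in setX S S by rewrite in_setX r0S.
case: (arg_maxnP (fun pr : V * V => d pr.1 pr.2) r0r0) => [[r x0]].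
move=> hrx0 hmax0.
have : (r, x0) \in setX S S by [].
rewrite in_setX /= => /andP [rS x0S].
have hmax : forall j, j \in setX S S -> d j.1 j.2 <= d r x0 by move=> j hj; apply: hmax0 j hj.
have diam : forall x, x \in S -> d r x + d x x0 = d r x0.
  move=> x xS; case: (h3 r x x0 rS xS x0S) => [/Bt_d //|[/Bt_d h|/Bt_d h]].
  - have := hmax (x, x0); rewrite in_setX xS x0S /= => /(_ isT).
    by move: h; rewrite (dC x r); lia.
  - have := hmax (r, x); rewrite in_setX xS rS /= => /(_ isT).
    by move: h; rewrite (dC x0 x); lia.
have key : forall x y, x \in S -> y \in S -> d r x <= d r y -> d r x + d x y = d r y.
  move=> x y xS yS hxy; case: (h3 r x y rS xS yS) => [/Bt_d //|[hb|/Bt_d h]].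
  - have h := proj1 (Bt_d x r y) hb.
    case: (posnP (d r x)) => [hx0|hxpos].
      by move: h; rewrite (dC x r) hx0; lia.
    have hypos : 0 < d r y by lia.
    have [c1 hc1] := dpos hxpos.
    have [c2 hc2] := dpos hypos.
    have bx := proj2 (Bt_d r x x0) (diam x xS).
    have byy := proj2 (Bt_d r y x0) (diam y yS).
    have [e1 e2 e3] := bool_aux (hb c1) (bx c1) hc1.
    have hb' : Bt P y r x := Bt_sym hb.
    have [f1 f2 f3] := bool_aux (hb' c2) (byy c2) hc2.
    by case: (hC c1 c2 x0 x y r e1 e2 e3 f1 f2 f3).
  - by move: h; rewrite (dC y x); lia.
pose R := fun x y => d r x <= d r y.
have Rtr : transitive R by move=> ? ? ? ; apply: leq_trans.
have Rrefl : reflexive R by move=> ?; apply: leqnn.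
have Rtot : total R by move=> ? ?; apply: leq_total.
pose s := sort R (enum S).
have hs : forall x, (x \in s) = (x \in S) by move=> x; rewrite mem_sort mem_enum.
have ss : sorted R s := sort_sorted Rtot _.
exists s; split => //; first by rewrite sort_uniq enum_uniq.
have hle : forall x y, x \in s -> y \in s -> index x s <= index y s -> d r x <= d r y.
  move=> x y xs ys h.
  have H := sorted_leq_nth Rtr Rrefl x ss.
  have hx : index x s < size s by rewrite index_mem.
  have hy : index y s < size s by rewrite index_mem.
  by have := H _ _ hx hy h; rewrite /R !nth_index.
move=> x y z xs ys zs ixy iyz; apply/Bt_d.
have k1 := key x y; have k2 := key y z; have k3 := key x z.
rewrite -!hs in k1 k2 k3.
have := k1 xs ys (hle _ _ xs ys (ltnW ixy)).
have := k2 ys zs (hle _ _ ys zs (ltnW iyz)).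
have := k3 xs zs (hle _ _ xs zs (ltnW (ltn_trans ixy iyz))).
lia.
Qed.
End Metric.

Section Trees.
Variables (V A : finType) (P : V -> rel A).
Hypothesis HP : forall i, strict_linear_order (P i).

Lemma sides (S : {set V}) (E : {set {set V}}) a b u v :
  connected_on S E -> u \in S -> a != b ->
  (forall x, x \in S ->
     (connect (adj (E :\ [set u; v])) u x -> P x a b) /\
     (connect (adj (E :\ [set u; v])) v x -> P x b a)) ->
  forall y, y \in S ->
    connect (adj (E :\ [set u; v])) u y = P y a b /\
    connect (adj (E :\ [set u; v])) v y = ~~ P y a b.
Proof.
move=> hc uS nab H y yS.
have [Hu Hv] := H y yS.
rewrite lo_flip // in Hv.
case: (cover_e v (hc u y uS yS)) => h.
- have hy := Hu h; rewrite h hy /=; split => //.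
  by apply/negP => /Hv; rewrite hy.
- have hy := Hv h; rewrite h (negbTE hy) /=; split => //.
  by apply/negP => /Hu h'; rewrite h' in hy.
Qed.

Lemma tree_C (E : {set {set V}}) : is_tree [set: V] E -> single_crossing P [set: V] E ->
  Ccond P.
Proof.
move=> [_ hconn _] hsc [a1 b1] [a2 b2] p q r w /= e1 e2 e3 f1 f2 f3.
have n1 : a1 != b1 by case: (eqVneq a1 b1) e3 => [->|//]; rewrite !(lo_irr HP).
have n2 : a2 != b2 by case: (eqVneq a2 b2) f3 => [->|//]; rewrite !(lo_irr HP).
case: (hsc _ _ n1) => [[ea [eaE [u1 [v1 [nuv1 euv1 H1]]]]]|[H|H]]; first last.
- by move: e3; rewrite -[P p a1 b1]negbK -[P r a1 b1]negbK -(lo_flip HP p n1) -(lo_flip HP r n1) !H ?in_setT.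
- by move: e3; rewrite !H ?in_setT.
case: (hsc _ _ n2) => [[eb [ebE [u2 [v2 [nuv2 euv2 H2]]]]]|[H|H]]; first last.
- by move: f3; rewrite -[P p a2 b2]negbK -[P q a2 b2]negbK -(lo_flip HP p n2) -(lo_flip HP q n2) !H ?in_setT.
- by move: f3; rewrite !H ?in_setT.
subst ea eb.
have pl1 := sides hconn (in_setT u1) n1 H1.
have pl2 := sides hconn (in_setT u2) n2 H2.
set K1 := connect (adj (E :\ [set u1; v1])).
set K2 := connect (adj (E :\ [set u2; v2])).
pose t1 := if P p a1 b1 then u1 else v1.
pose t2 := if P p a1 b1 then v1 else u1.
have pt1 : forall y, K1 t1 y = (P y a1 b1 == P p a1 b1).
  move=> y; have [h1 h2] := pl1 y (in_setT y); rewrite /t1 /K1.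
  by case: (P p a1 b1); rewrite ?h1 ?h2; case: (P y a1 b1).
have pt2 : forall y, K1 t2 y = (P y a1 b1 != P p a1 b1).
  move=> y; have [h1 h2] := pl1 y (in_setT y); rewrite /t2 /K1.
  by case: (P p a1 b1); rewrite ?h1 ?h2; case: (P y a1 b1).
have t1e : t1 \in [set u1; v1] by rewrite /t1; case: (P p a1 b1); rewrite !inE eqxx ?orbT.
have cov2 : forall t, K2 u2 t \/ K2 v2 t by move=> t; apply: cover_e; apply: hconn; rewrite in_setT.
have G : forall t, (forall y, K1 t y -> y \notin [set u2; v2]) ->
    forall al be, K1 t al -> K1 t be -> P al a2 b2 != P be a2 b2 -> False.
  move=> t ht al be hal hbe hne.
  have hal' := path_cross ht hal; have hbe' := path_cross ht hbe.
  case: (cov2 t) => h.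
  - have := proj1 (pl2 al (in_setT _)); have := proj1 (pl2 be (in_setT _)).
    rewrite /K2 (connect_trans h hal') (connect_trans h hbe') => hb ha.
    by rewrite -ha -hb in hne.
  - have := proj2 (pl2 al (in_setT _)); have := proj2 (pl2 be (in_setT _)).
    rewrite /K2 (connect_trans h hal') (connect_trans h hbe').
    by move=> /esym/negbTE hb /esym/negbTE ha; rewrite ha hb in hne.
have Kp : K1 t1 p by rewrite pt1.
have Kq : K1 t1 q by rewrite pt1 -e1.
have Kr : K1 t2 r by rewrite pt2 eq_sym.
have Kw : K1 t2 w by rewrite pt2 -e2 eq_sym.
case: (eqVneq [set u2; v2] [set u1; v1]) => [eqe|nee].
- move: t1e; rewrite -eqe => /set2P [] et.
  + have := proj1 (pl2 p (in_setT _)); have := proj1 (pl2 q (in_setT _)).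
    by rewrite /K2 eqe -et -/K1 Kp Kq => hb ha; rewrite -ha -hb in f3.
  + have := proj2 (pl2 p (in_setT _)); have := proj2 (pl2 q (in_setT _)).
    rewrite /K2 eqe -et -/K1 Kp Kq => /esym/negbTE hb /esym/negbTE ha.
    by rewrite ha hb in f3.
have ad : adj (E :\ [set u1; v1]) u2 v2 by rewrite /adj nuv2 !inE nee.
have disj : forall y, K1 t1 y -> K1 t2 y -> False.
  by move=> y; rewrite pt1 pt2 => /eqP ->; rewrite eqxx.
have cov1 : forall y, K1 t1 y \/ K1 t2 y.
  by move=> y; rewrite pt1 pt2; case: eqP; [left|right].
case: (cov1 u2) => hu.
- have hv : K1 t1 v2 := connect_trans hu (connect1 ad).
  apply: (G t2) Kr Kw _.
    move=> y hy; rewrite !inE; apply/negP => /orP [] /eqP ey; subst y; [exact: disj hu hy | exact: disj hv hy].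
  by move: f3; rewrite f1 f2.
- have hv : K1 t2 v2 := connect_trans hu (connect1 ad).
  apply: (G t1) Kp Kq f3.
  move=> y hy; rewrite !inE; apply/negP => /orP [] /eqP ey; subst y; [exact: disj hy hu | exact: disj hy hv].
Qed.

Lemma sep (S : {set V}) (E : {set {set V}}) (a b : A) (o o' : V) :
  is_tree S E -> single_crossing P S E -> a != b ->
  o \in S -> o' \in S -> P o a b != P o' a b ->
  (forall w, w \in S -> w != o -> P w a b = P o' a b) ->
  exists t, [/\ [set o; t] \in E, t \in S, t != o,
    (forall w, w \in S -> w != o -> ~~ connect (adj (E :\ [set o; t])) o w) &
    (forall w, w \in S -> w != o -> connect (adj (E :\ [set o; t])) t w)].
Proof.
move=> [hed hconn _] hsc nab oS o'S hoo' hoth.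
case: (hsc _ _ nab) => [[e [eE [u [v [nuv euv H]]]]]|[H|H]]; first last.
- by move: hoo'; rewrite -[P o a b]negbK -[P o' a b]negbK -(lo_flip HP o nab) -(lo_flip HP o' nab) !H.
- by move: hoo'; rewrite !H.
subst e.
have [x' [y' [x'S y'S _ exy]]] := hed _ eE.
have uS : u \in S by move: (set21 u v); rewrite exy => /set2P [] ->.
have vS : v \in S by move: (set22 u v); rewrite exy => /set2P [] ->.
have pl := sides hconn uS nab H.
set K := connect (adj (E :\ [set u; v])).
suff gen : forall t1 t2, [set t1; t2] = [set u; v] -> t1 \in S -> t2 \in S ->
   (forall w, w \in S -> K t1 w = (P w a b == P o a b)) ->
   (forall w, w \in S -> K t2 w = (P w a b != P o a b)) ->
   exists t, [/\ [set o; t] \in E, t \in S, t != o,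
    (forall w, w \in S -> w != o -> ~~ connect (adj (E :\ [set o; t])) o w) &
    (forall w, w \in S -> w != o -> connect (adj (E :\ [set o; t])) t w)].
  case hpo: (P o a b).
  - apply: (gen u v) => // w wS; have [h1 h2] := pl w wS; rewrite /K ?h1 ?h2 hpo;
      by case: (P w a b).
  - apply: (gen v u) => //; first by rewrite setUC.
    + move=> w wS; have [h1 h2] := pl w wS; rewrite /K ?h1 ?h2 hpo; by case: (P w a b).
    + move=> w wS; have [h1 h2] := pl w wS; rewrite /K ?h1 ?h2 hpo; by case: (P w a b).
move=> t1 t2 et t1S t2S k1 k2.
have t1o : t1 = o.
  apply/eqP; apply: contraT => nt.
  by have := k1 t1 t1S; rewrite /K connect0 (hoth _ t1S nt) eq_sym (negbTE hoo').
subst t1.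
have t2o : t2 != o.
  by apply/negP => /eqP e2; have := k2 t2 t2S; rewrite /K connect0 e2 eqxx.
exists t2; split => //; first by rewrite et.
- by move=> w wS nwo; rewrite et -/K k1 // hoth // eq_sym (negbTE hoo').
- by move=> w wS nwo; rewrite et -/K k2 // hoth // eq_sym hoo'.
Qed.

Lemma dup (E : {set {set V}}) (o1 o2 t1 t2 k : V) : [set o1; t1] = [set o2; t2] -> o1 != o2 ->
  ~~ connect (adj (E :\ [set o1; t1])) o1 k -> connect (adj (E :\ [set o2; t2])) t2 k -> False.
Proof.
move=> e n h1 h2.
have : o1 \in [set o2; t2] by rewrite -e set21.
case/set2P => eo; first by rewrite eo eqxx in n.
by rewrite e eo h2 in h1.
Qed.

Lemma tree_T3 : (forall S : {set V}, S != set0 -> exists E, is_tree S E /\ single_crossing P S E) ->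
  T3on P [set: V].
Proof.
move=> H x y z _ _ _.
case: (eqVneq x y) => [<-|nxy]; first by left; apply: Bt_l.
case: (eqVneq y z) => [<-|nyz]; first by left; apply: Bt_r.
case: (eqVneq x z) => [<-|nxz]; first by right; left; apply: Bt_r.
apply: NNPP => hn.
have nb : forall u m w, ~ Bt P u m w ->
    exists c : A * A, P u c.1 c.2 = P w c.1 c.2 /\ P m c.1 c.2 != P u c.1 c.2.
  move=> u m w hb; apply: NNPP => hc; apply: hb => c huw; apply/eqP; apply: NNPP => hne.
  by apply: hc; exists c; split => //; apply/negP.
have [[a1 b1] [c1a c1b]] := nb x y z (fun h => hn (or_introl h)).
have [[a2 b2] [c2a c2b]] := nb y x z (fun h => hn (or_intror (or_introl h))).
have [[a3 b3] [c3a c3b]] := nb x z y (fun h => hn (or_intror (or_intror h))).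
simpl in *.
have nyx : y != x by rewrite eq_sym.
have nzy : z != y by rewrite eq_sym.
have nzx : z != x by rewrite eq_sym.
set S := [set x; y; z].
have xS : x \in S by rewrite !inE eqxx.
have yS : y \in S by rewrite !inE eqxx !orbT.
have zS : z \in S by rewrite !inE eqxx !orbT.
have mS : forall t, t \in S -> [\/ t = x, t = y | t = z].
  by move=> t; rewrite !inE => /orP [/orP [] /eqP ->|/eqP ->]; [constructor 1|constructor 2|constructor 3].
have [E [ht hsc]] : exists E, is_tree S E /\ single_crossing P S E.
  by apply: H; apply/set0Pn; exists x.
have n1 : a1 != b1 by case: (eqVneq a1 b1) c1b => [->|//]; rewrite !(lo_irr HP).
have n2 : a2 != b2 by case: (eqVneq a2 b2) c2b => [->|//]; rewrite !(lo_irr HP).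
have n3 : a3 != b3 by case: (eqVneq a3 b3) c3b => [->|//]; rewrite !(lo_irr HP).
have [ty [ey tyS nty ny cy]] := sep ht hsc n1 yS xS c1b
  (fun w wS nw => match mS w wS with Or31 e => ltac:(by rewrite e) | Or32 e => ltac:(by rewrite e eqxx in nw)
      | Or33 e => ltac:(by rewrite e c1a) end).
have [tx [ex txS ntx nx cx]] := sep ht hsc n2 xS yS c2b
  (fun w wS nw => match mS w wS with Or31 e => ltac:(by rewrite e eqxx in nw) | Or32 e => ltac:(by rewrite e)
      | Or33 e => ltac:(by rewrite e c2a) end).
have [tz [ez tzS ntz nz cz]] := sep ht hsc n3 zS xS c3b
  (fun w wS nw => match mS w wS with Or31 e => ltac:(by rewrite e) | Or32 e => ltac:(by rewrite e c3a)
      | Or33 e => ltac:(by rewrite e eqxx in nw) end).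
have cyc : [set x; y] \in E -> [set y; z] \in E -> [set z; x] \in E -> False.
  move=> e1 e2 e3; case: ht => _ _ hac; apply: hac; exists x, [:: y; z]; split => //.
  - by rewrite /= !inE negb_or nxy nxz nyz.
  - by rewrite /= /adj nxy nyz e1 e2.
  - by rewrite /= /adj nzx e3.
case: (mS tx txS) => etx; subst tx; first by rewrite eqxx in ntx.
- case: (mS ty tyS) => ety; subst ty.
  + exact: (dup (setUC _ _) nxy (nx z zS nzx) (cy z zS nzy)).
  + by rewrite eqxx in nty.
  + case: (mS tz tzS) => etz; subst tz.
    * exact: cyc.
    * exact: (dup (setUC _ _) nyz (ny x xS nxy) (cz x xS nxz)).
    * by rewrite eqxx in ntz.
- case: (mS tz tzS) => etz; subst tz.
  + exact: (dup (setUC _ _) nxz (nx y yS nyx) (cz y yS nyz)).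
  + case: (mS ty tyS) => ety; subst ty.
    * by apply: cyc; rewrite setUC.
    * by rewrite eqxx in nty.
    * exact: (dup (setUC _ _) nyz (ny x xS nxy) (cz x xS nxz)).
  + by rewrite eqxx in ntz.
Qed.
End Trees.

Unset Implicit Arguments.

Theorem theorem5 (V A : finType) (P : V -> rel A)
  (HP : forall i, strict_linear_order (P i))
  (Htree : exists E, is_tree [set: V] E /\ single_crossing P [set: V] E) :
  (forall S : {set V}, S != set0 ->
     exists E, is_tree S E /\ single_crossing P S E)
  <->
  (exists E, is_path_graph [set: V] E /\ single_crossing P [set: V] E).
Proof.
have hC : Ccond P by case: Htree => E [ht hsc]; exact: (@tree_C _ _ P HP E ht hsc).
split.
- move=> H.
  have h3 := @tree_T3 _ _ P HP H.
  have [s [us hs hm]] := Mline h3 hC.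
  exists (pathE s); split; first by exists s.
  exact: (@path_sc _ _ P HP s _ us hs hm).
- move=> [E [[s [us hs eE]] hsc]].
  have eE' : E = pathE s := eE.
  subst E.
  have alls : forall x, x \in s by move=> x; rewrite hs in_setT.
  have hm := @sc_path_mono _ _ P HP s us alls hsc.
  move=> S _.
  have h3 : T3on P S by move=> x y z _ _ _; apply: (mono_T3 hm); apply: alls.
  have [s' [us' hs' hm']] := Mline h3 hC.
  exists (pathE s'); split; first exact: path_tree us' hs'.
  exact: (@path_sc _ _ P HP s' S us' hs' hm').
Qed.
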